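(* Let $G$ be a compact connected Lie group with $n$-dimensional Lie algebra $\mathfrak g$, $\langle\cdot,\cdot\rangle$ an $\mathrm{Ad}_G$-invariant scalar product on $\mathfrak g$, $\mathbb I:\mathfrak g\to\mathfrak g$ symmetric positive definite, and $\epsilon$ a real parameter. Let $E_1,\dots,E_n$ be an orthonormal basis of $\mathfrak g$ and $\mathcal O_{E_i}$ the adjoint orbit of $E_i$. Fix $1\le k<n$. On $$\mathcal M=\{(\omega,e_1,\dots,e_n)\in\mathfrak g\times\mathcal O_{E_1}\times\cdots\times\mathcal O_{E_n}:\ \langle e_i,e_j\rangle=\delta_{ij}\}$$ consider the system $$\dot m=[m,\omega]+\sum_{i=1}^k\lambda^ie_i,\quad m=\mathbb I\omega,\qquad \dot e_i=\epsilon[e_i,\omega],\ i=1,\dots,n,$$ with $\lambda^i=-\sum_{j=1}^k\langle e_j,\mathbb I^{-1}[m,\omega]\rangle\mathbb A^{ij}$, where $(\mathbb A^{ij})$ is the inverse of $\mathbb A_{ij}=\langle e_i,\mathbb I^{-1}e_j\rangle$, $i,j=1,\dots,k$. Let $\mathcal H=\mathrm{span}\{e_1,\dots,e_k\}$, $\mathcal D=\mathrm{span}\{e_{k+1},\dots,e_n\}$, let $\mathrm{pr}_{\mathcal H},\mathrm{pr}_{\mathcal D}$ be the orthogonal projections onto them, and define the momentum $\mathbf m=\mathrm{pr}_{\mathcal D}\mathbb I\omega+\mathrm{pr}_{\mathcal H}\omega=\mathbf J\omega$, $\mathbf J=\mathrm{pr}_{\mathcal D}\mathbb I+\mathrm{pr}_{\mathcal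 H}$. Then along trajectories, $\omega=\mathbf J^{-1}\mathbf m$ and $(\mathbf m,e_{k+1},\dots,e_n)$ satisfies the closed system on $$\mathcal N=\{(\mathbf m,e_{k+1},\dots,e_n)\in\mathfrak g\times\mathcal O_{E_{k+1}}\times\cdots\times\mathcal O_{E_n}:\ \langle e_i,e_j\rangle=\delta_{ij}\}$$ given by $$\dot{\mathbf m}=\epsilon[\mathbf m,\omega]+(1-\epsilon)\,\mathrm{pr}_{\mathcal D}[\mathbb I\omega,\omega],\qquad \dot e_i=\epsilon[e_i,\omega],\quad i=k+1,\dots,n.$$
   Context: Here $\mathrm{pr}_{\mathcal H}=\mathbb E-\mathrm{pr}_{\mathcal D}$ where $\mathbb E$ is the identity, so both projections depend only on $e_{k+1},\dots,e_n$, and $\mathbf J$ is invertible. *)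

(* Defs.v *)
From HB Require Import structures.
From mathcomp Require Import all_boot all_order all_algebra.
From mathcomp Require Import all_classical all_reals all_analysis.
Set Implicit Arguments. Unset Strict Implicit. Unset Printing Implicit Defensive.
Import Order.TTheory GRing.Theory Num.Theory.
Import numFieldNormedType.Exports.
Local Open Scope classical_set_scope.
Local Open Scope ring_scope.

(* The Lie algebra g (dimension n) is modelled as 'rV[R]_n, the scalar
   product <.,.> being the standard dot product (coordinates in an
   orthonormal basis of the invariant scalar product). *)
Definition dotv (R : ringType) (n : nat) (u v : 'rV[R]_n) : R := (u *m v^T) 0 0.

(* br is a Lie bracket on g and <.,.> is ad-invariant (equivalently, for a
   connected group, Ad-invariant).  A finite-dimensional real Lie algebra
   with such a product is exactly the Lie algebra of a compact connected
   Lie group. *)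
Definition invariant_lie_bracket (R : realType) (n : nat)
  (br : 'rV[R]_n -> 'rV[R]_n -> 'rV[R]_n) : Prop :=
  [/\ (forall (a : R) x y z, br (a *: x + y) z = a *: br x z + br y z),
      (forall x y, br x y = - br y x),
      (forall x y z, br x (br y z) + br y (br z x) + br z (br x y) = 0)
    & (forall x y z, dotv (br x y) z = dotv x (br y z))].

(* Adjoint orbit of E: points Ad_{g} E, i.e. endpoints c(1) of curves
   c(t) = Ad_{g(t)} E with g(0) = 1, which are exactly the solutions of
   c' = [X(t), c], c(0) = E, for continuous X (X = g' g^{-1}). *)
Definition adjoint_orbit (R : realType) (n : nat)
  (br : 'rV[R]_n -> 'rV[R]_n -> 'rV[R]_n) (E : 'rV[R]_n) : set 'rV[R]_n :=
  [set y | exists (X c : R -> 'rV[R]_n),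
      continuous X /\
      (forall t : R, derivable c t 1 /\ 'D_1 c t = br (X t) (c t)) /\
      c 0 = E /\ c 1 = y].

Definition rows_mx (R : ringType) (d n : nat) (f : 'I_d -> 'rV[R]_n) : 'M[R]_(d, n) :=
  \matrix_(i < d) f i.

Definition orthoproj (R : realType) (d n : nat) (U : 'M[R]_(d, n)) (v : 'rV[R]_n)
  : 'rV[R]_n :=
  xget 0 [set p : 'rV[R]_n | (p <= U)%MS /\
            forall u : 'rV[R]_n, (u <= U)%MS -> dotv (v - p) u = 0].

Definition nh_multiplier (R : realType) (k n : nat)
  (br : 'rV[R]_n -> 'rV[R]_n -> 'rV[R]_n) (I : 'M[R]_n)
  (es : 'I_k -> 'rV[R]_n) (m om : 'rV[R]_n) (i : 'I_k) : R :=
  let A := \matrix_(i0 < k, j0 < k) dotv (es i0) (es j0 *m invmx I) in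
  - \sum_(j < k) dotv (es j) (br m om *m invmx I) * (invmx A) i j.

(* Main.v *)
Require Import Defs.
From HB Require Import structures.
From mathcomp Require Import all_boot all_order all_algebra.
From mathcomp Require Import all_classical all_reals all_analysis.
Import Order.TTheory GRing.Theory Num.Theory.
Import numFieldNormedType.Exports.
Local Open Scope classical_set_scope.
Local Open Scope ring_scope.

Set Implicit Arguments. Unset Strict Implicit. Unset Printing Implicit Defensive.

Section D.
Variable R : realType.

Lemma isd_entry m n (A : R -> 'M[R]_(m, n)) (dA : 'M[R]_(m,n)) (t : R) (i : 'I_m) (j : 'I_n) :
  is_derive t 1 A dA -> is_derive t 1 (fun x => A x i j) (dA i j).
Proof.
move=> hA; have dA' := @ex_derive _ _ _ _ _ _ _ hA.
apply: DeriveDef; first exact: ((derivable_mxP A t 1).1 dA' i j).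
have := derive_mx dA'; rewrite derive_val => /(congr1 (fun M : 'M[R]_(m,n) => M i j)).
by rewrite mxE.
Qed.

Lemma isd_mx m n (A : R -> 'M[R]_(m, n)) (D : 'M[R]_(m,n)) (t : R) :
  (forall i j, is_derive t 1 (fun x => A x i j) (D i j)) -> is_derive t 1 A D.
Proof.
move=> h.
have dA : derivable A t 1.
  by apply/derivable_mxP => i j; exact: (@ex_derive _ _ _ _ _ _ _ (h i j)).
apply: DeriveDef => //; rewrite derive_mx //; apply/matrixP => i j.
by rewrite mxE derive_val.
Qed.

Lemma isd_mulmx m n p (A : R -> 'M[R]_(m, n)) (B : R -> 'M[R]_(n, p)) dA dB (t : R) :
  is_derive t 1 A dA -> is_derive t 1 B dB ->
  is_derive t 1 (fun s => A s *m B s) (dA *m B t + A t *m dB).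
Proof.
move=> hA hB; apply: isd_mx => i j.
have -> : (fun x => (A x *m B x) i j) =
   \sum_(l < n) ((fun x => A x i l) * (fun x => B x l j)).
  by apply/funext => x; rewrite fct_sumE mxE.
rewrite !mxE -big_split /=.
apply: is_derive_eq.
  apply: is_derive_sum => l; apply: is_deriveM; [exact: isd_entry|exact: isd_entry].
apply: eq_bigr => l _ /=. rewrite addrC (mulrC (dA i l)). by [].
Qed.

Lemma isd_tr m n (A : R -> 'M[R]_(m, n)) dA (t : R) :
  is_derive t 1 A dA -> is_derive t 1 (fun s => (A s)^T) dA^T.
Proof.
move=> hA; apply: isd_mx => i j.
have -> : (fun x => (A x)^T i j) = (fun x => A x j i) by apply/funext => x; rewrite mxE.
by rewrite mxE; exact: isd_entry.
Qed.

Lemma isd_scale m n (c : R -> R) (A : R -> 'M[R]_(m, n)) dc dA (t : R) :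
  is_derive t 1 c dc -> is_derive t 1 A dA ->
  is_derive t 1 (fun s => c s *: A s) (c t *: dA + dc *: A t).
Proof.
move=> hc hA; apply: isd_mx => i j.
have -> : (fun x => (c x *: A x) i j) = c * (fun x => A x i j).
  by apply/funext => x; rewrite mxE.
rewrite !mxE; apply: is_derive_eq.
  by apply: is_deriveM => //; exact: isd_entry.
by rewrite /= (mulrC dc).
Qed.

Lemma isd_cst m n (C : 'M[R]_(m, n)) (t : R) : is_derive t 1 (fun _ : R => C) 0.
Proof. exact: is_derive_cst. Qed.

End D.

Section Dot.
Variable R : realType.
Variable n : nat.
Implicit Types u v w : 'rV[R]_n.

Lemma dotvE u v : dotv u v = \sum_j u 0 j * v 0 j.
Proof. by rewrite /dotv mxE; apply: eq_bigr => j _; rewrite mxE. Qed.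

Lemma dotvC u v : dotv u v = dotv v u.
Proof. by rewrite !dotvE; apply: eq_bigr => j _; rewrite mulrC. Qed.

Lemma dotvDl u v w : dotv (u + v) w = dotv u w + dotv v w.
Proof. by rewrite !dotvE -big_split; apply: eq_bigr => j _; rewrite mxE mulrDl. Qed.

Lemma dotvZl (a : R) u w : dotv (a *: u) w = a * dotv u w.
Proof. by rewrite !dotvE mulr_sumr; apply: eq_bigr => j _; rewrite mxE mulrA. Qed.

Lemma dotvNl u w : dotv (- u) w = - dotv u w.
Proof. by rewrite -scaleN1r dotvZl mulN1r. Qed.

Lemma dotvBl u v w : dotv (u - v) w = dotv u w - dotv v w.
Proof. by rewrite dotvDl dotvNl. Qed.

Lemma dotv0l w : dotv 0 w = 0.
Proof. by rewrite -(scale0r (0 : 'rV[R]_n)) dotvZl mul0r. Qed.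

Lemma dotvDr u v w : dotv w (u + v) = dotv w u + dotv w v.
Proof. by rewrite !(dotvC w) dotvDl. Qed.
Lemma dotvZr (a : R) u w : dotv w (a *: u) = a * dotv w u.
Proof. by rewrite !(dotvC w) dotvZl. Qed.
Lemma dotvNr u w : dotv w (- u) = - dotv w u.
Proof. by rewrite !(dotvC w) dotvNl. Qed.
Lemma dotvBr u v w : dotv w (u - v) = dotv w u - dotv w v.
Proof. by rewrite !(dotvC w) dotvBl. Qed.
Lemma dotv0r w : dotv w 0 = 0.
Proof. by rewrite dotvC dotv0l. Qed.

Lemma dotv_suml p (F : 'I_p -> 'rV[R]_n) w :
  dotv (\sum_(i < p) F i) w = \sum_(i < p) dotv (F i) w.
Proof.
elim/big_ind2: _ => //; first by rewrite dotv0l.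
by move=> x1 x2 y1 y2 <- <-; rewrite dotvDl.
Qed.

Lemma dotv_sumr p (F : 'I_p -> 'rV[R]_n) w :
  dotv w (\sum_(i < p) F i) = \sum_(i < p) dotv w (F i).
Proof. by rewrite dotvC dotv_suml; apply: eq_bigr => i _; rewrite dotvC. Qed.

Lemma dotv_sumZl p (a : 'I_p -> R) (f : 'I_p -> 'rV[R]_n) w :
  dotv (\sum_(i < p) a i *: f i) w = \sum_(i < p) a i * dotv (f i) w.
Proof. by rewrite dotv_suml; apply: eq_bigr => i _; rewrite dotvZl. Qed.

Lemma dotvv_eq0 u : dotv u u = 0 -> u = 0.
Proof.
rewrite dotvE => /eqP; rewrite psumr_eq0; last by move=> j _; rewrite -expr2 sqr_ge0.
move=> /allP h; apply/rowP => j; rewrite mxE.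
by have /implyP := h j (mem_index_enum _) => /(_ isT); rewrite mulf_eq0 orbb => /eqP.
Qed.

Section Ortho.
Variable p : nat.
Variable f : 'I_p -> 'rV[R]_n.
Hypothesis hf : forall i j, dotv (f i) (f j) = (i == j)%:R.

Lemma dot_basis (a : 'I_p -> R) l : dotv (\sum_(i < p) a i *: f i) (f l) = a l.
Proof.
rewrite dotv_sumZl (bigD1 l) //= hf eqxx mulr1 big1 ?addr0 // => i /negbTE il.
by rewrite hf il mulr0.
Qed.

Lemma orthoproj_sum v : orthoproj (rows_mx f) v = \sum_(i < p) dotv v (f i) *: f i.
Proof.
set P := \sum_(i < p) _.
have Psub : (P <= rows_mx f)%MS.
  have -> : P = (\row_i dotv v (f i)) *m rows_mx f.
    rewrite mulmx_sum_row; apply: eq_bigr => i _.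
    by rewrite mxE /rows_mx rowK.
  exact: submxMl.
have Porth : forall u : 'rV[R]_n, (u <= rows_mx f)%MS -> dotv (v - P) u = 0.
  move=> u /submxP [x ->]; rewrite mulmx_sum_row dotv_sumr big1 // => i _.
  rewrite /rows_mx rowK dotvZr dotvBl dot_basis subrr mulr0 //.
apply: xget_unique; first by split.
move=> q [qsub qorth].
have rsub : (P - q <= rows_mx f)%MS by rewrite addmx_sub // eqmx_opp.
have := qorth _ rsub; have := Porth _ rsub => h1 h2.
apply/eqP; rewrite eq_sym -subr_eq0; apply/eqP; apply: dotvv_eq0.
have -> : dotv (P - q) (P - q) = dotv (v - q) (P - q) - dotv (v - P) (P - q).
  by rewrite -dotvBl; congr dotv; rewrite opprB [RHS]addrC -addrA addKr.
by rewrite h1 h2 subrr.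
Qed.

End Ortho.
End Dot.

Section Br.
Variable R : realType.
Variable n : nat.
Variable br : 'rV[R]_n -> 'rV[R]_n -> 'rV[R]_n.
Hypothesis hbr : invariant_lie_bracket br.

Lemma brDl x y z : br (x + y) z = br x z + br y z.
Proof. move: hbr; rewrite /invariant_lie_bracket => -[] h _ _ _. by have := h 1 x y z; rewrite !scale1r. Qed.
Lemma br0l z : br 0 z = 0.
Proof.
move: hbr; rewrite /invariant_lie_bracket => -[] h _ _ _; have := h 1 0 0 z; rewrite scale1r addr0 scale1r => e.
have : br 0 z + br 0 z - br 0 z = br 0 z - br 0 z by rewrite -e.
by rewrite addrK subrr.
Qed.
Lemma brZl (a : R) x z : br (a *: x) z = a *: br x z.
Proof.
move: hbr; rewrite /invariant_lie_bracket => -[] h _ _ _; have := h a x 0 z; rewrite addr0 => ->.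
by rewrite br0l addr0.
Qed.
Lemma br_suml p (a : 'I_p -> R) (x : 'I_p -> 'rV[R]_n) z :
  br (\sum_(i < p) a i *: x i) z = \sum_(i < p) a i *: br (x i) z.
Proof.
elim/big_ind2: _ => //; first by rewrite br0l.
  by move=> x1 x2 y1 y2 <- <-; rewrite brDl.
by move=> i _; rewrite brZl.
Qed.
Lemma br_anti x y : br x y = - br y x.
Proof. by move: hbr; rewrite /invariant_lie_bracket => -[]. Qed.
Lemma br_self x : br x x = 0.
Proof.
apply/eqP; have := br_anti x x => /eqP; rewrite -subr_eq0 opprK -mulr2n.
by rewrite -scaler_nat scaler_eq0 pnatr_eq0.
Qed.
Lemma br_inv x y z : dotv (br x y) z = dotv x (br y z).
Proof. by move: hbr; rewrite /invariant_lie_bracket => -[]. Qed.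

End Br.

Section Extra.
Variable R : realType.

Lemma isd_dotv n (u w : R -> 'rV[R]_n) du dw (t : R) :
  is_derive t 1 u du -> is_derive t 1 w dw ->
  is_derive t 1 (fun s => dotv (u s) (w s)) (dotv du (w t) + dotv (u t) dw).
Proof.
move=> hu hw; rewrite /dotv.
apply: is_derive_eq; first exact: (isd_entry 0 0 (isd_mulmx hu (isd_tr hw))).
by rewrite mxE.
Qed.

Lemma isd_sumf n p (h : 'I_p -> R -> 'rV[R]_n) dh (t : R) :
  (forall i, is_derive t 1 (h i) (dh i)) ->
  is_derive t 1 (fun s => \sum_(i < p) h i s) (\sum_(i < p) dh i).
Proof. by move=> hh; have := is_derive_sum hh; rewrite fct_sumE. Qed.

Lemma isd_add n (f g : R -> 'rV[R]_n) df dg (t : R) :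
  is_derive t 1 f df -> is_derive t 1 g dg ->
  is_derive t 1 (fun s => f s + g s) (df + dg).
Proof. by move=> hf hg; have := is_deriveD hf hg. Qed.

End Extra.

Unset Implicit Arguments.
(* n = k + d with k >= 1 and d >= 1 (i.e. 1 <= k < n);
   e (lshift d i) = e_{i+1} (i < k),  e (rshift k j) = e_{k+1+j} (j < d). *)
Theorem proposition2 (R : realType) (k d : nat) (hk : (0 < k)%N) (hd : (0 < d)%N)
  (br : 'rV[R]_(k + d) -> 'rV[R]_(k + d) -> 'rV[R]_(k + d))
  (II : 'M[R]_(k + d)) (eps : R) (E : 'I_(k + d) -> 'rV[R]_(k + d))
  (a b : R) (omega : R -> 'rV[R]_(k + d)) (e : 'I_(k + d) -> R -> 'rV[R]_(k + d)) :
  invariant_lie_bracket br ->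
  II^T = II ->
  (forall v : 'rV[R]_(k + d), v != 0 -> 0 < dotv v (v *m II)) ->
  (forall i j, dotv (E i) (E j) = (i == j)%:R) ->
  (* the trajectory stays in M *)
  (forall t, a < t < b ->
     (forall i, adjoint_orbit br (E i) (e i t)) /\
     (forall i j, dotv (e i t) (e j t) = (i == j)%:R)) ->
  (* the equations of motion *)
  (forall t, a < t < b ->
     derivable (fun s => omega s *m II) t 1 /\
     'D_1 (fun s => omega s *m II) t =
       br (omega t *m II) (omega t) +
       \sum_(i < k) nh_multiplier br II (fun i0 => e (lshift d i0) t)
                      (omega t *m II) (omega t) i *: e (lshift d i) t) ->
  (forall i t, a < t < b ->
     derivable (e i) t 1 /\ 'D_1 (e i) t = eps *: br (e i t) (omega t)) ->
  let prH := fun t => orthoproj (rows_mx (fun i : 'I_k => e (lshift d i) t)) in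
  let prD := fun t => orthoproj (rows_mx (fun j : 'I_d => e (rshift k j) t)) in
  let J := fun t (w : 'rV[R]_(k + d)) => prD t (w *m II) + prH t w in
  let mm := fun t => J t (omega t) in
  forall t, a < t < b ->
    (* omega = J^{-1} m *)
    (forall w, J t w = mm t -> w = omega t) /\
    (* the reduced equations *)
    (derivable mm t 1 /\
     'D_1 mm t = eps *: br (mm t) (omega t)
                 + (1 - eps) *: prD t (br (omega t *m II) (omega t))) /\
    (forall j : 'I_d, derivable (e (rshift k j)) t 1 /\
       'D_1 (e (rshift k j)) t = eps *: br (e (rshift k j) t) (omega t)) /\
    (* (m, e_{k+1},...,e_n) lies in N *)
    (forall j : 'I_d, adjoint_orbit br (E (rshift k j)) (e (rshift k j) t)) /\
    (forall j1 j2 : 'I_d, dotv (e (rshift k j1) t) (e (rshift k j2) t) = (j1 == j2)%:R).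
Proof.
move=> hbr hsym hpos hE hM heq he prH prD J mm t ht.
have htt := hM t ht.
set eH := fun i : 'I_k => e (lshift d i) t.
set eD := fun j : 'I_d => e (rshift k j) t.
have onH : forall s, a < s < b -> forall i j : 'I_k,
    dotv (e (lshift d i) s) (e (lshift d j) s) = (i == j)%:R.
  by move=> s hs i j; rewrite (hM s hs).2 eq_lshift.
have onD : forall s, a < s < b -> forall i j : 'I_d,
    dotv (e (rshift k i) s) (e (rshift k j) s) = (i == j)%:R.
  by move=> s hs i j; rewrite (hM s hs).2 eq_rshift.
have cHD : forall (i : 'I_k) (j : 'I_d), dotv (eH i) (eD j) = 0.
  by move=> i j; rewrite /eH /eD htt.2 eq_lrshift.
have cDH : forall (j : 'I_d) (i : 'I_k), dotv (eD j) (eH i) = 0.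
  by move=> j i; rewrite dotvC.
have prHE : forall s, a < s < b -> forall v,
    prH s v = \sum_(i < k) dotv v (e (lshift d i) s) *: e (lshift d i) s.
  by move=> s hs v; rewrite /prH orthoproj_sum //; exact: onH.
have prDE : forall s, a < s < b -> forall v,
    prD s v = \sum_(j < d) dotv v (e (rshift k j) s) *: e (rshift k j) s.
  by move=> s hs v; rewrite /prD orthoproj_sum //; exact: onD.
have zeroH : forall (a0 : 'I_k -> R) (l : 'I_d),
    dotv (\sum_(i < k) a0 i *: eH i) (eD l) = 0.
  by move=> a0 l; rewrite dotv_sumZl big1 // => i _; rewrite cHD mulr0.
have zeroD : forall (a0 : 'I_d -> R) (l : 'I_k),
    dotv (\sum_(j < d) a0 j *: eD j) (eH l) = 0.
  by move=> a0 l; rewrite dotv_sumZl big1 // => i _; rewrite cDH mulr0.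
have coordH : forall (a0 : 'I_d -> R) (b0 : 'I_k -> R) l,
    dotv (\sum_(j < d) a0 j *: eD j + \sum_(i < k) b0 i *: eH i) (eH l) = b0 l.
  move=> a0 b0 l; rewrite dotvDl zeroD add0r dot_basis //; exact: onH.
have coordD : forall (a0 : 'I_d -> R) (b0 : 'I_k -> R) l,
    dotv (\sum_(j < d) a0 j *: eD j + \sum_(i < k) b0 i *: eH i) (eD l) = a0 l.
  move=> a0 b0 l; rewrite dotvDl zeroH addr0 dot_basis //; exact: onD.
have compl : forall v : 'rV[R]_(k + d),
    v = \sum_(j < d) dotv v (eD j) *: eD j + \sum_(i < k) dotv v (eH i) *: eH i.
  move=> v.
  pose M : 'M[R]_(k + d) := \matrix_i e i t.
  have MM : M *m M^T = 1%:M.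
    apply/matrixP => i j; rewrite !mxE -htt.2 dotvE.
    by apply: eq_bigr => l _; rewrite !mxE.
  have MM' := mulmx1C MM.
  have vE : v = (v *m M^T) *m M by rewrite -mulmxA MM' mulmx1.
  rewrite {1}vE.
  rewrite mulmx_sum_row big_split_ord /= addrC.
  congr (_ + _); apply: eq_bigr => i _; rewrite /M rowK; congr (_ *: _);
    by rewrite dotvE mxE; apply: eq_bigr => l _; rewrite !mxE.
have IIu : II \in unitmx.
  rewrite unitmxE unitfE; apply/negP => /det0P [v vn0 vII].
  by have := hpos v vn0; rewrite vII dotv0r ltxx.
have prHt : forall v, prH t v = \sum_(i < k) dotv v (eH i) *: eH i.
  by move=> v; exact: prHE.
have prDt : forall v, prD t v = \sum_(j < d) dotv v (eD j) *: eD j.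
  by move=> v; exact: prDE.
split.
  move=> w Hw; move: Hw; rewrite /mm /J !prHt !prDt => Hw.
  have hH : forall l, dotv (w - omega t) (eH l) = 0.
    move=> l; have := congr1 (fun x => dotv x (eH l)) Hw.
    by rewrite /= !coordH dotvBl => ->; rewrite subrr.
  have hD : forall l, dotv ((w - omega t) *m II) (eD l) = 0.
    move=> l; have := congr1 (fun x => dotv x (eD l)) Hw.
    by rewrite /= !coordD mulmxBl dotvBl => ->; rewrite subrr.
  move: hH hD; set v := w - omega t => hH hD.
  have vv : dotv v (v *m II) = 0.
    rewrite {1}(compl v) dotvDl !dotv_sumZl !big1 ?addr0 //.
      by move=> i _; rewrite hH mul0r.
    by move=> i _; rewrite [dotv (eD i) _]dotvC hD mulr0.
  case: (eqVneq v 0) => [v0|vn0]; last by have := hpos v vn0; rewrite vv ltxx.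
  by apply/eqP; rewrite -subr_eq0 -/v v0.
split; last first.
  split; first by move=> j; exact: he.
  split; first by move=> j; exact: htt.1.
  by move=> j1 j2; exact: onD.
have [dmd dmE] := heq t ht.
move: dmE.
set dm := 'D_1 (fun s => omega s *m II) t => dmE.
have hdm : is_derive t 1 (fun s => omega s *m II) dm := derivableP dmd.
have hom : is_derive t 1 omega (dm *m invmx II).
  have -> : omega = (fun s => (omega s *m II) *m invmx II).
    by apply/funext => s; rewrite mulmxK.
  apply: is_derive_eq; first exact: (isd_mulmx hdm (isd_cst (invmx II) t)).
  by rewrite mulmx0 addr0.
have hde : forall i, is_derive t 1 (e i) (eps *: br (e i t) (omega t)).
  by move=> i; have [h1 <-] := he i t ht; exact: derivableP.
pose mf := fun s => \sum_(j < d) dotv (omega s *m II) (e (rshift k j) s) *: e (rshift k j) s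
   + \sum_(i < k) dotv (omega s) (e (lshift d i) s) *: e (lshift d i) s.
have near_eq : \forall s \near t, mf s = mm s.
  have ht' : t \in `]a, b[ by rewrite in_itv /= ht.
  apply: filterS (near_in_itvoo ht') => s; rewrite in_itv /= => hs.
  by rewrite /mf /mm /J (prHE s hs) (prDE s hs).
pose D := \sum_(j < d) (dotv (omega t *m II) (eD j) *: (eps *: br (eD j) (omega t))
     + (dotv dm (eD j) + dotv (omega t *m II) (eps *: br (eD j) (omega t))) *: eD j)
  + \sum_(i < k) (dotv (omega t) (eH i) *: (eps *: br (eH i) (omega t))
     + (dotv (dm *m invmx II) (eH i) + dotv (omega t) (eps *: br (eH i) (omega t))) *: eH i).
have hmf : is_derive t 1 mf D.
  apply: isd_add; apply: isd_sumf => j.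
    exact: (isd_scale (isd_dotv hdm (hde _)) (hde _)).
  exact: (isd_scale (isd_dotv hom (hde _)) (hde _)).
have hmm : is_derive t 1 mm D := near_eq_is_derive near_eq hmf.
split; first exact: (@ex_derive _ _ _ _ _ _ _ hmm).
rewrite (@derive_val _ _ _ _ _ _ _ hmm).
pose c := br (omega t *m II) (omega t).
have lamD : forall j, dotv dm (eD j) = dotv c (eD j).
  by move=> j; rewrite dmE dotvDl zeroH addr0.
have bD : forall x, dotv (omega t *m II) (eps *: br x (omega t)) = - (eps * dotv c x).
  move=> x; rewrite dotvZr -(br_inv hbr) (br_anti hbr (omega t *m II)) dotvNl.
  by rewrite (br_inv hbr) dotvC mulrN.
have bH : forall x, dotv (omega t) (eps *: br x (omega t)) = 0.
  move=> x; rewrite dotvZr -(br_inv hbr) (br_anti hbr (omega t)) dotvNl.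
  by rewrite (br_inv hbr) (br_self hbr) dotv0r oppr0 mulr0.
have cH : forall i, dotv (dm *m invmx II) (eH i) = 0.
  pose cc := fun j : 'I_k => dotv (eH j) (c *m invmx II).
  pose A := \matrix_(i0 < k, j0 < k) dotv (eH i0) (eH j0 *m invmx II).
  have Au : A \in unitmx.
    rewrite unitmxE unitfE; apply/negP => /det0P [x xn0 xA].
    have [y yE] : {y | y = \sum_(i < k) x 0 i *: eH i} by eexists.
    have hy : forall j, dotv y (eH j *m invmx II) = 0.
      move=> j; have := congr1 (fun M : 'rV_k => M 0 j) xA; rewrite !mxE /= => <-.
      rewrite yE dotv_sumZl; apply: eq_bigr => i _; by rewrite mxE.
    have [z zE] : {z | z = y *m invmx II} by eexists.
    have yz : y = z *m II by rewrite zE mulmxKV.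
    have zz : dotv z (z *m II) = 0.
      rewrite -yz dotvC zE {2}yE mulmx_suml dotv_sumr big1 // => i _.
      by rewrite -scalemxAl dotvZr hy mulr0.
    have z0 : z = 0.
      by case: (eqVneq z 0) => // zn0; have := hpos z zn0; rewrite zz ltxx.
    have y0 : y = 0 by rewrite yz z0 mul0mx.
    apply: (negP xn0); apply/eqP/rowP => l; rewrite mxE.
    have : dotv y (eH l) = x 0 l.
      by rewrite yE; exact: (dot_basis (onH t ht) (fun i => x 0 i) l).
    by rewrite y0 dotv0l => <-.
  have key : forall i, \sum_(l < k) (\sum_(j < k) cc j * invmx A l j) * A i l = cc i.
    move=> i.
    under eq_bigr do rewrite mulr_suml.
    rewrite exchange_big /=.
    transitivity (\sum_(j < k) cc j * (A *m invmx A) i j).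
      apply: eq_bigr => j _; rewrite mxE mulr_sumr; apply: eq_bigr => l _.
      by rewrite -mulrA (mulrC (invmx A l j)).
    rewrite mulmxV // (bigD1 i) //= mxE eqxx mulr1 big1 ?addr0 // => j /negbTE ji.
    by rewrite mxE eq_sym ji mulr0.
  move=> i; rewrite dmE mulmxDl mulmx_suml dotvDl dotv_suml.
  have -> : \sum_(l < k) dotv ((nh_multiplier br II (fun i1 => e (lshift d i1) t)
       (omega t *m II) (omega t) l *: e (lshift d l) t) *m invmx II) (eH i) = - cc i.
    rewrite -key -sumrN; apply: eq_bigr => l _.
    rewrite -scalemxAl dotvZl /nh_multiplier /= mulNr; congr (- (_ * _)).
    by rewrite dotvC mxE.
  by rewrite dotvC subrr.
have S1 : \sum_(j < d) (dotv (omega t *m II) (eD j) *: (eps *: br (eD j) (omega t))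
     + (dotv dm (eD j) + dotv (omega t *m II) (eps *: br (eD j) (omega t))) *: eD j)
   = eps *: \sum_(j < d) dotv (omega t *m II) (eD j) *: br (eD j) (omega t)
     + (1 - eps) *: \sum_(j < d) dotv c (eD j) *: eD j.
  rewrite !scaler_sumr -big_split; apply: eq_bigr => j _ /=.
  rewrite lamD bD !scalerA; congr (_ + _); first by rewrite mulrC.
  by rewrite mulrBl mul1r.
have S2 : \sum_(i < k) (dotv (omega t) (eH i) *: (eps *: br (eH i) (omega t))
     + (dotv (dm *m invmx II) (eH i) + dotv (omega t) (eps *: br (eH i) (omega t))) *: eH i)
   = eps *: \sum_(i < k) dotv (omega t) (eH i) *: br (eH i) (omega t).
  rewrite scaler_sumr; apply: eq_bigr => i _.
  by rewrite cH bH addr0 scale0r addr0 !scalerA mulrC.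
have mmt : mm t = mf t by rewrite /mm /J prHt prDt.
rewrite /D S1 S2 mmt prDt /mf (brDl hbr) !(br_suml hbr) scalerDr.
by rewrite addrAC.


Qed.
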